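(* Let $\Bbbk$ be a field, $m\in\mathbb N$, $K=\Bbbk[\sigma]/(\sigma^m)\subset L=\Bbbk[\varepsilon]/(\varepsilon^{2m})$ via $\sigma=\varepsilon^2$, $K_j=K/(\sigma^j)$ and $L_j=L/(\varepsilon^{2j})$. Let $0\le j\le m$, $V=K\oplus K_j$, and let $\tilde\theta:V\to L$ be an injective $K$-linear map such that its adjoint $\theta:L\otimes_K V\cong L\oplus L_j\to L$ is surjective; write $\theta=(a\mid b)$ with $a,b\in L$, $\varepsilon^{2j}b=0$ (for $j=0$ the second entry is absent). Then there exists an element $\gamma=\alpha_0+\alpha_1\varepsilon^2+\dots+\alpha_{m-j-1}\varepsilon^{2(m-j-1)}\in L$ ($\alpha_i\in\Bbbk$) such that $\theta$ is equivalent to $\vartheta_\gamma:=(1+\varepsilon\gamma\mid\varepsilon^{2(m-j)+1})$. Moreover, $\vartheta_\gamma$ and $\vartheta_{\gamma'}$ are equivalent if and only if $\gamma=\gamma'$.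
   Context: Two $L$-linear maps $\theta,\theta':L\otimes_K V\to L$ are called equivalent if there is $\varphi\in\operatorname{Aut}_K(V)$ with $\theta'=\theta\circ(1\otimes\varphi)$. *)

(* Defs.v *)
From HB Require Import structures.
From mathcomp Require Import all_boot all_order all_algebra.
Set Implicit Arguments. Unset Strict Implicit. Unset Printing Implicit Defensive.
Import GRing.Theory.
Local Open Scope ring_scope.

(* Concrete model:
   - an element of L = k[eps]/(eps^(2m)) is represented by a polynomial in eps;
   - an element of K = k[sigma]/(sigma^m) (resp. K_j = K/(sigma^j)) by a
     polynomial in sigma;
   - equality in these rings is congruence modulo 'X^(2m), 'X^m, 'X^j;
   - the inclusion K -> L, sigma |-> eps^2, is  x |-> x \Po 'X^2. *)

Section Defs.
Variable k : fieldType.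

Definition eqmod (n : nat) (p q : {poly k}) : Prop := 'X^n %| (p - q).

Definition embK (x : {poly k}) : {poly k} := x \Po 'X^2.

(* K-linear endomorphism phi of V = K (+) K_j given by
   phi(e1) = p e1 + q e2,  phi(e2) = r e1 + s e2  (p,r in K, q,s in K_j);
   it is well defined iff sigma^j r = 0 in K. *)
Definition homV_ok (m j : nat) (r : {poly k}) : Prop :=
  eqmod m (r * 'X^j) 0.

Definition compV_id (m j : nat) (p q r s p' q' r' s' : {poly k}) : Prop :=
  [/\ eqmod m (p * p' + q * r') 1, eqmod j (p * q' + q * s') 0,
      eqmod m (r * p' + s * r') 0 & eqmod j (r * q' + s * s') 1].

Definition autV (m j : nat) (p q r s : {poly k}) : Prop :=
  homV_ok m j r /\
  exists p' q' r' s' : {poly k},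
    [/\ homV_ok m j r', compV_id m j p q r s p' q' r' s'
      & compV_id m j p' q' r' s' p q r s].

(* theta = (a | b) and theta' = (a' | b') : L (+) L_j -> L are equivalent:
   theta' = theta o (1 (x) phi) for some phi in Aut_K(V). *)
Definition equivalent (m j : nat) (a b a' b' : {poly k}) : Prop :=
  exists p q r s : {poly k},
    [/\ autV m j p q r s,
        eqmod (2 * m) a' (embK p * a + embK q * b)
      & eqmod (2 * m) b' (embK r * a + embK s * b)].

Definition tilde_injective (m j : nat) (a b : {poly k}) : Prop :=
  forall x y : {poly k},
    eqmod (2 * m) (embK x * a + embK y * b) 0 -> eqmod m x 0 /\ eqmod j y 0.

Definition adjoint_surjective (m : nat) (a b : {poly k}) : Prop :=
  forall c : {poly k}, exists u v : {poly k}, eqmod (2 * m) c (u * a + v * b).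

(* vartheta_gamma = (1 + eps gamma | eps^(2(m-j)+1)), gamma = g(eps^2) *)
Definition vartheta_a (g : {poly k}) : {poly k} := 1 + 'X * embK g.
Definition vartheta_b (m j : nat) : {poly k} := 'X^((2 * (m - j)).+1).

End Defs.

(* Main.v *)
Require Import Defs.
From mathcomp Require Import all_boot all_order all_algebra.
From mathcomp Require Import ring zify.
Set Implicit Arguments. Unset Strict Implicit. Unset Printing Implicit Defensive.
Import GRing.Theory.
Local Open Scope ring_scope.

Lemma dvdXnP (k : fieldType) n (p : {poly k}) :
  'X^n %| p <-> forall i, (i < n)%N -> p`_i = 0.
Proof.
split.
  by move=> /dvdpP [q ->] i lt; rewrite coefMXn lt.
move=> H; apply/dvdpP; exists (\poly_(i < size p) p`_(i + n)).
apply/polyP => i; rewrite coefMXn coef_poly; case: ltnP => [hi|hi].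
  by rewrite H.
case: ltnP => h2; first by rewrite subnK.
by rewrite nth_default //; apply: leq_trans h2 (leq_subr _ _).
Qed.

Lemma embK_even (k : fieldType) (w : {poly k}) : even_poly (embK w) = w.
Proof.
apply/polyP => i; rewrite coef_even_poly /embK coef_comp_poly_Xn //.
by rewrite -muln2 dvdn_mull // mulnK.
Qed.

Lemma embK_odd (k : fieldType) (w : {poly k}) : odd_poly (embK w) = 0.
Proof.
apply/polyP => i; rewrite coef_odd_poly /embK coef_comp_poly_Xn // coef0.
by rewrite dvdn2 /= odd_double.
Qed.

Lemma even_f (k : fieldType) (w z : {poly k}) : even_poly (embK w + 'X * embK z) = w.
Proof. by rewrite even_polyD mulrC even_polyMX embK_even embK_odd mul0r addr0. Qed.

Lemma odd_f (k : fieldType) (w z : {poly k}) : odd_poly (embK w + 'X * embK z) = z.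
Proof. by rewrite odd_polyD mulrC odd_polyMX embK_even embK_odd add0r. Qed.

Lemma decomp (k : fieldType) (f : {poly k}) : f = embK (even_poly f) + 'X * embK (odd_poly f).
Proof. by rewrite /embK mulrC poly_even_odd. Qed.

Lemma embKXn (k : fieldType) n : embK ('X^n : {poly k}) = 'X^(2 * n).
Proof. by rewrite /embK comp_Xn_poly exprM. Qed.

Lemma embKM (k : fieldType) (p q : {poly k}) : embK (p * q) = embK p * embK q.
Proof. exact: comp_polyM. Qed.
Lemma embKD (k : fieldType) (p q : {poly k}) : embK (p + q) = embK p + embK q.
Proof. exact: comp_polyD. Qed.
Lemma embKB (k : fieldType) (p q : {poly k}) : embK (p - q) = embK p - embK q.
Proof. exact: comp_polyB. Qed.
Lemma embK1 (k : fieldType) : embK (1 : {poly k}) = 1.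
Proof. by rewrite /embK comp_polyC. Qed.
Lemma embK0 (k : fieldType) : embK (0 : {poly k}) = 0.
Proof. by rewrite /embK comp_poly0. Qed.

Lemma KL0 (k : fieldType) m (w z : {poly k}) :
  'X^(2 * m) %| embK w + 'X * embK z <-> 'X^m %| w /\ 'X^m %| z.
Proof.
split.
  move=> /dvdXnP H; split; apply/dvdXnP => i hi.
    by rewrite -(even_f w z) coef_even_poly H //; lia.
  by rewrite -(odd_f w z) coef_odd_poly H //; lia.
move=> [/dvdpP [w' ->] /dvdpP [z' ->]].
rewrite !embKM !embKXn mulrA -mulrDl; exact: dvdp_mull.
Qed.

Lemma lin (k : fieldType) (P Q a0 a1 b0 b1 : {poly k}) :
  embK P * (embK a0 + 'X * embK a1) + embK Q * (embK b0 + 'X * embK b1) =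
  embK (P * a0 + Q * b0) + 'X * embK (P * a1 + Q * b1).
Proof. rewrite !embKD !embKM; ring. Qed.

Lemma KLe (k : fieldType) m (u v u' v' : {poly k}) :
  'X^m %| u - u' -> 'X^m %| v - v' ->
  eqmod (2 * m) (embK u + 'X * embK v) (embK u' + 'X * embK v').
Proof.
move=> h1 h2; rewrite /eqmod.
have -> : embK u + 'X * embK v - (embK u' + 'X * embK v') =
   embK (u - u') + 'X * embK (v - v') by rewrite !embKB; ring.
by apply/KL0.
Qed.

Lemma inv_mod (k : fieldType) n (p : {poly k}) : p`_0 != 0 -> exists q, 'X^n %| q * p - 1.
Proof.
move=> p0.
have cop : coprimep p ('X^n).
  apply: coprimep_expr.
  have -> : ('X : {poly k}) = 'X - 0%:P by rewrite subr0.
  by rewrite coprimep_XsubC rootE horner_coef0.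
case/Bezout_coprimepP: cop => [[u v]] /= /eqpf_eq [c c0 H].
exists (c^-1 *: u).
have -> : c^-1 *: u * p - 1 = c^-1 *: (u * p + v * 'X^n - c *: 1) - c^-1 *: v * 'X^n.
  rewrite scalerBr scalerA mulVf // scale1r -!scalerAl; ring.
by rewrite H subrr scaler0 sub0r dvdpNr dvdp_mull.
Qed.

Lemma eqmod_le (k : fieldType) n n' (p q : {poly k}) : (n <= n')%N -> eqmod n' p q -> eqmod n p q.
Proof. by move=> le; apply: dvdp_trans; apply: dvdp_exp2l. Qed.

Definition cid (k : fieldType) m (p q r s p' q' r' s' : {poly k}) :=
  [/\ 'X^m %| p * p' + q * r' - 1, 'X^m %| p * q' + q * s',
      'X^m %| r * p' + s * r' & 'X^m %| r * q' + s * s' - 1].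

Lemma cid_compV (k : fieldType) m j (p q r s p' q' r' s' : {poly k}) : (j <= m)%N ->
  cid m p q r s p' q' r' s' -> compV_id m j p q r s p' q' r' s'.
Proof.
move=> jm [h1 h2 h3 h4]; split.
- exact: h1.
- by apply: (eqmod_le jm); rewrite /eqmod subr0.
- by rewrite /eqmod subr0.
- by apply: (eqmod_le jm).
Qed.

Lemma equiv_of (k : fieldType) m j (a0 a1 b0 b1 u v u' v' P Q R S P' Q' R' S' : {poly k}) :
 (j <= m)%N ->
 'X^m %| R * 'X^j -> 'X^m %| R' * 'X^j ->
 cid m P Q R S P' Q' R' S' -> cid m P' Q' R' S' P Q R S ->
 'X^m %| u - (P * a0 + Q * b0) -> 'X^m %| v - (P * a1 + Q * b1) ->
 'X^m %| u' - (R * a0 + S * b0) -> 'X^m %| v' - (R * a1 + S * b1) ->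
 equivalent m j (embK a0 + 'X * embK a1) (embK b0 + 'X * embK b1)
   (embK u + 'X * embK v) (embK u' + 'X * embK v').
Proof.
move=> jm hR hR' c1 c2 e1 e2 e3 e4.
exists P, Q, R, S; split.
- split; first by rewrite /homV_ok /eqmod subr0.
  exists P', Q', R', S'; split; first by rewrite /homV_ok /eqmod subr0.
    exact: cid_compV.
  exact: cid_compV.
- by rewrite lin; apply: KLe.
- by rewrite lin; apply: KLe.
Qed.

Lemma dvd_eq (k : fieldType) (d p q : {poly k}) : p = q -> d %| q -> d %| p.
Proof. by move=> ->. Qed.

Lemma KLr (k : fieldType) m (u v u' v' : {poly k}) :
  eqmod (2 * m) (embK u + 'X * embK v) (embK u' + 'X * embK v') ->
  'X^m %| u - u' /\ 'X^m %| v - v'.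
Proof.
rewrite /eqmod.
have -> : embK u + 'X * embK v - (embK u' + 'X * embK v') =
   embK (u - u') + 'X * embK (v - v') by rewrite !embKB; ring.
by move/KL0.
Qed.

Lemma va_dec (k : fieldType) (g : {poly k}) : vartheta_a g = embK 1 + 'X * embK g.
Proof. by rewrite /vartheta_a embK1. Qed.

Lemma vb_dec (k : fieldType) m j : vartheta_b k m j = embK 0 + 'X * embK ('X^(m - j)).
Proof. by rewrite /vartheta_b embK0 add0r embKXn exprS. Qed.

Lemma Xn_neq0 (k : fieldType) n : ('X^n : {poly k}) != 0.
Proof. by rewrite -size_poly_eq0 size_polyXn. Qed.

Lemma small_dvd (k : fieldType) n (p : {poly k}) : (size p <= n)%N -> 'X^n %| p -> p = 0.
Proof.
move=> sp dv; apply/eqP; apply: contraT => p0.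
by have := dvdp_leq p0 dv; rewrite size_polyXn ltnNge sp.
Qed.

Lemma part2 (k : fieldType) m j (g g' : {poly k}) : (j <= m)%N ->
  (size g <= m - j)%N -> (size g' <= m - j)%N ->
  (equivalent m j (vartheta_a g) (vartheta_b k m j)
                      (vartheta_a g') (vartheta_b k m j) <-> g = g').
Proof.
move=> jm sg sg'; split.
  move=> [P [Q [R [S [_ h1 _]]]]].
  move: h1; rewrite !va_dec vb_dec lin => /KLr [h1 h2].
  apply/eqP; rewrite eq_sym -subr_eq0; apply/eqP; apply: (small_dvd (n := m - j)).
    apply: (leq_trans (size_polyD _ _)); by rewrite size_polyN geq_max sg sg'.
  have hn : 'X^(m - j) %| ('X^m : {poly k}) by apply: dvdp_exp2l; lia.
  apply: (dvd_eq (q := (g' - (P * g + Q * 'X^(m - j))) - (1 - (P * 1 + Q * 0)) * g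
                       + Q * 'X^(m - j))); first by ring.
  apply: dvdp_add; last exact: dvdp_mull.
  apply: dvdp_sub; first by have := dvdp_trans hn h2.
  by apply: dvdp_mulr; by have := dvdp_trans hn h1.
move=> <-; rewrite !va_dec vb_dec.
apply: (@equiv_of _ _ _ _ _ _ _ _ _ _ _ 1 0 0 1 1 0 0 1) => //;
  rewrite ?mul0r ?dvdp0 //; try (split; rewrite ?mul0r ?mulr0 ?mul1r ?add0r ?addr0 ?subrr ?dvdp0 //).
all: apply: (dvd_eq (q := 0)); [ring | exact: dvdp0].
Qed.

Lemma dvdX_coef0 (k : fieldType) (p : {poly k}) : p`_0 = 0 -> 'X %| p.
Proof.
move=> h; have -> : ('X : {poly k}) = 'X^1 by rewrite expr1.
apply/dvdXnP => i; rewrite ltnS leqn0 => /eqP ->; exact: h.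
Qed.

Lemma noXdiv (k : fieldType) m (x : k) : (0 < m)%N -> 'X^m %| 'X^(m.-1) * x%:P -> x = 0.
Proof.
move=> m0 dv; apply/eqP; apply: contraT => x0.
have nz : 'X^(m.-1) * x%:P != 0 by rewrite mulrC mul_polyC scaler_eq0 negb_or x0 Xn_neq0.
have := dvdp_leq nz dv; rewrite mulrC mul_polyC size_scale // !size_polyXn.
by rewrite prednK // ltnn.
Qed.

Lemma kernel2 (k : fieldType) (al be ga de : k) : al * de - be * ga = 0 ->
  exists x y : k, (x != 0 \/ y != 0) /\ x * al + y * ga = 0 /\ x * be + y * de = 0.
Proof.
move=> D.
have [ga0|ga0] := eqVneq ga 0.
  have [al0|al0] := eqVneq al 0.
    have [be0|be0] := eqVneq be 0.
      exists 1, 0; split; first by left; exact: oner_neq0.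
      by rewrite ga0 al0 be0; split; ring.
    exists de, (- be); split; first by right; rewrite oppr_eq0.
    by rewrite ga0 al0; split; ring.
  exists ga, (- al); split; first by right; rewrite oppr_eq0.
  split; first by ring.
  by transitivity (- (al * de - be * ga)); [ring | rewrite D oppr0].
exists ga, (- al); split; first by left.
split; first by ring.
by transitivity (- (al * de - be * ga)); [ring | rewrite D oppr0].
Qed.

Lemma exist0 (k : fieldType) m (a0 a1 b0 b1 : {poly k}) :
  (forall x y, 'X^m %| x * a0 + y * b0 -> 'X^m %| x * a1 + y * b1 ->
     'X^m %| x /\ 'X^m %| y) ->
  equivalent m m (embK a0 + 'X * embK a1) (embK b0 + 'X * embK b1)
    (vartheta_a 0) (vartheta_b k m m).
Proof.
move=> inj.
have [Di HD] : exists Di, 'X^m %| Di * (a0 * b1 - a1 * b0) - 1.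
  case: (posnP m) => [-> | m0]; first by exists 0; rewrite expr0 dvd1p.
  apply: inv_mod; apply: contraT; rewrite negbK => /eqP D0.
  move: D0; rewrite coefB !coef0M => D0.
  have [x [y [nz [e1 e2]]]] := kernel2 D0.
  have eX : ('X^m : {poly k}) = 'X^(m.-1) * 'X by rewrite -exprSr prednK.
  have [h1 h2] : 'X^m %| 'X^(m.-1) * x%:P /\ 'X^m %| 'X^(m.-1) * y%:P.
    apply: inj.
    - have: 'X %| x%:P * a0 + y%:P * b0 by apply: dvdX_coef0; rewrite coefD !coefCM.
      case/dvdpP => q hq; apply: (dvd_eq (q := q * 'X^m)); last exact: dvdp_mull.
      by rewrite eX mulrCA -hq; ring.
    - have: 'X %| x%:P * a1 + y%:P * b1 by apply: dvdX_coef0; rewrite coefD !coefCM.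
      case/dvdpP => q hq; apply: (dvd_eq (q := q * 'X^m)); last exact: dvdp_mull.
      by rewrite eX mulrCA -hq; ring.
  move: (noXdiv m0 h1) (noXdiv m0 h2) => x0 y0.
  by case: nz; rewrite ?x0 ?y0 eqxx.
rewrite va_dec vb_dec subnn expr0.
apply: (@equiv_of _ _ _ _ _ _ _ _ _ _ _ (Di * b1) (- (Di * a1)) (- (Di * b0)) (Di * a0)
          a0 a1 b0 b1) => //; try exact: dvdp_mull; try split;
  first [ apply: (dvd_eq (q := 0)); [ring | exact: dvdp0]
        | apply: (dvd_eq (q := (Di * (a0 * b1 - a1 * b0) - 1) * 1)); [ring | exact: dvdp_mulr]
        | apply: (dvd_eq (q := (Di * (a0 * b1 - a1 * b0) - 1) * (-1))); [ring | exact: dvdp_mulr]].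
Qed.

Lemma exist1 (k : fieldType) n j (a0 a1 b0' b1' : {poly k}) : (0 < n)%N -> a0`_0 != 0 ->
  (forall x y, 'X^(n + j) %| x * a0 + y * (b0' * 'X^n) ->
     'X^(n + j) %| x * a1 + y * (b1' * 'X^n) -> 'X^j %| y) ->
  exists g : {poly k}, (size g <= n)%N /\
    equivalent (n + j) j (embK a0 + 'X * embK a1)
      (embK (b0' * 'X^n) + 'X * embK (b1' * 'X^n)) (vartheta_a g) (vartheta_b k (n + j) j).
Proof.
move=> n0 a00 inj.
have [c E1] := inv_mod (n + j) a00.
have [e [f [E2 E3]]] : exists e f, 'X^(n + j) %| e * f - 1 /\
    'X^j %| e * (b1' - b0' * c * a1) - 1.
  case: (posnP j) => [j0 | j0].
    by exists 1, 1; rewrite j0 expr0 dvd1p mul1r subrr dvdp0.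
  have d0 : (b1' - b0' * c * a1)`_0 != 0.
    apply: contraT; rewrite negbK => /eqP d0.
    case/dvdpP: (dvdX_coef0 d0) => q hq.
    have eX2 : ('X^(n + j) : {poly k}) = 'X^(j.-1) * 'X^n * 'X.
      by rewrite -exprD -exprSr; congr (_ ^+ _); rewrite addnC -addSn prednK.
    have := inj ('X^(j.-1) * (- (b0' * 'X^n * c))) ('X^(j.-1)).
    have dv : ~ ('X^j %| ('X^(j.-1) : {poly k})).
      move=> hd; have hs : (size ('X^(j.-1) : {poly k}) <= j)%N.
        by rewrite size_polyXn prednK.
      by have := @Xn_neq0 k j.-1; rewrite (small_dvd hs hd) eqxx.
    move=> H; exfalso; apply: dv; apply: H.
      apply: (dvd_eq (q := (c * a0 - 1) * (- ('X^(j.-1) * 'X^n * b0')))); first by ring.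
      exact: dvdp_mulr.
    apply: (dvd_eq (q := q * 'X^(n + j))); last exact: dvdp_mull.
    rewrite eX2; transitivity ('X^(j.-1) * 'X^n * (b1' - b0' * c * a1)); first by ring.
    by rewrite hq; ring.
  have [e He] := inv_mod (n + j) d0.
  exists e, (b1' - b0' * c * a1); split=> //.
  by apply: dvdp_trans He; apply: dvdp_exp2l; apply: leq_addl.
have [g1 [g [Hg sg]]] : exists g1 g, c * a1 = g1 * 'X^n + g /\ (size g <= n)%N.
  exists (c * a1 %/ 'X^n), (c * a1 %% 'X^n); split; first exact: divp_eq.
  by have := ltn_modp (c * a1) ('X^n); rewrite Xn_neq0 size_polyXn ltnS.
exists g; split=> //.
have Hg' : g = c * a1 - g1 * 'X^n by rewrite Hg; ring.
have eXm : ('X^(n + j) : {poly k}) = 'X^n * 'X^j by rewrite exprD.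
have E3' : 'X^(n + j) %| 'X^n * (e * (b1' - b0' * c * a1) - 1).
  by rewrite eXm; apply: dvdp_mul.
rewrite va_dec vb_dec addnK.
apply: (@equiv_of _ _ _ a0 a1 (b0' * 'X^n) (b1' * 'X^n) 1 g 0 ('X^n)
  (c + g1 * e * (b0' * 'X^n) * c) (- (g1 * e)) (- (e * (b0' * 'X^n) * c)) e
  a0 (a0 * g1) (b0' * 'X^n) (b0' * 'X^n * g1 + f)).
- exact: leq_addl.
- rewrite eXm; apply: (dvd_eq (q := (- (e * b0' * c)) * ('X^n * 'X^j))); first by ring.
  exact: dvdp_mull.
- rewrite eXm; apply: (dvd_eq (q := b0' * ('X^n * 'X^j))); first by ring.
  exact: dvdp_mull.
- split.
  + apply: (dvd_eq (q := (c * a0 - 1) * (1 + g1 * e * (b0' * 'X^n)))); first by ring.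
    exact: dvdp_mulr.
  + apply: (dvd_eq (q := (c * a0 - 1) * (g1 + g1 * g1 * e * (b0' * 'X^n)) - (e * f - 1) * g1)).
      by ring.
    by apply: dvdp_sub; apply: dvdp_mulr.
  + apply: (dvd_eq (q := (c * a0 - 1) * (- (e * (b0' * 'X^n))))); first by ring.
    exact: dvdp_mulr.
  + apply: (dvd_eq (q := (c * a0 - 1) * (- (e * (b0' * 'X^n) * g1)) + (e * f - 1) * 1)).
      by ring.
    by apply: dvdp_add; apply: dvdp_mulr.
- split.
  + apply: (dvd_eq (q := (c * a0 - 1) * 1)); first by ring.
    exact: dvdp_mulr.
  + apply: (dvd_eq (q := 0)); first by ring.
    exact: dvdp0.
  + apply: (dvd_eq (q := (e * f - 1) * (- (b0' * 'X^n * c)))); first by ring.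
    exact: dvdp_mulr.
  + apply: (dvd_eq (q := (e * f - 1) * 1)); first by ring.
    exact: dvdp_mulr.
- apply: (dvd_eq (q := (c * a0 - 1) * (- (1 + g1 * e * (b0' * 'X^n))))); first by ring.
  exact: dvdp_mulr.
- rewrite {1}Hg'.
  apply: (dvd_eq (q := ('X^n * (e * (b1' - b0' * c * a1) - 1)) * g1)); first by ring.
  exact: dvdp_mulr.
- apply: (dvd_eq (q := (c * a0 - 1) * (e * (b0' * 'X^n)))); first by ring.
  exact: dvdp_mulr.
- apply: (dvd_eq (q := ('X^n * (e * (b1' - b0' * c * a1) - 1)) * (-1))); first by ring.
  exact: dvdp_mulr.
Qed.

Theorem proposition3p6 (k : fieldType) (m j : nat) : (j <= m)%N ->
  (forall a b : {poly k},
      eqmod (2 * m) ('X^(2 * j) * b) 0 ->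
      tilde_injective m j a b ->
      adjoint_surjective m a b ->
      exists g : {poly k}, (size g <= m - j)%N /\
        equivalent m j a b (vartheta_a g) (vartheta_b k m j)) /\
  (forall g g' : {poly k}, (size g <= m - j)%N -> (size g' <= m - j)%N ->
      (equivalent m j (vartheta_a g) (vartheta_b k m j)
                      (vartheta_a g') (vartheta_b k m j) <-> g = g')).
Proof.
move=> jm.
split; last by move=> g g' sg sg'; exact: part2.
move=> a b hb inj surj.
have [n em] : exists n, m = (n + j)%N by exists (m - j)%N; rewrite subnK.
subst m; rewrite addnK.
move: hb inj surj; rewrite (decomp a) (decomp b).
move: (even_poly a) (odd_poly a) (even_poly b) (odd_poly b) => a0 a1 b0 b1 hb inj surj.
have injK : forall x y, 'X^(n + j) %| x * a0 + y * b0 ->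
    'X^(n + j) %| x * a1 + y * b1 -> 'X^(n + j) %| x /\ 'X^j %| y.
  move=> x y h1 h2; have := inj x y; rewrite /eqmod !subr0 lin; apply.
  by apply/KL0; split.
have [hb0 hb1] : 'X^n %| b0 /\ 'X^n %| b1.
  move: hb; rewrite /eqmod subr0 (_ : 'X^(2 * j) = embK 'X^j); last by rewrite embKXn.
  have -> : embK 'X^j * (embK b0 + 'X * embK b1) =
      embK ('X^j * b0) + 'X * embK ('X^j * b1) by rewrite !embKM; ring.
  move/KL0 => [h1 h2].
  by rewrite addnC exprD !dvdp_mul2l ?Xn_neq0 in h1 h2.
case: (posnP n) => [n0 | n0].
  subst n; exists 0; split; first by rewrite size_poly0.
  rewrite add0n in injK *.
  by apply: exist0 => x y h1 h2; apply: injK.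
case/dvdpP: hb0 => b0' eb0; case/dvdpP: hb1 => b1' eb1; subst b0 b1.
have a00 : a0`_0 != 0.
  have [u [v hs]] := surj 1.
  move: hs; rewrite /eqmod => /dvdXnP H.
  have : (1 - (u * (embK a0 + 'X * embK a1) + v * (embK (b0' * 'X^n) + 'X * embK (b1' * 'X^n))))`_0 = 0.
    by apply: H; rewrite muln_gt0 addn_gt0 n0.
  have hA : (embK a0 + 'X * embK a1)`_0 = a0`_0.
    by rewrite -[in RHS](even_f a0 a1) coef_even_poly.
  have hB : (embK (b0' * 'X^n) + 'X * embK (b1' * 'X^n))`_0 = 0.
    transitivity ((b0' * 'X^n)`_0); last by rewrite coefMXn n0.
    by rewrite -[in RHS](even_f (b0' * 'X^n) (b1' * 'X^n)) coef_even_poly.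
  rewrite coefB coefD !coef0M hA hB mulr0 addr0 coefC /=.
  move=> h; apply/eqP => a0z; move: h; rewrite a0z mulr0 subr0 => /eqP.
  by rewrite oner_eq0.
apply: exist1 => // x y h1 h2; exact: (injK x y h1 h2).2.
Qed.
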